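(* Let $p,q,r,s,t$ be parameters and let $(a_n)_{n\ge0}$ be defined by $a_0=1$, $a_1=p$, $a_2=q$ and, for $n\ge3$, $$a_n=r\,a_{n-1}+s\,a_{n-2}+t\sum_{k=1}^{n-3}a_ka_{n-k-2}.$$ Then the generating function $\sum_{n\ge0}a_nx^n$ equals $$\left(\frac{1-(r-p)x-(-q+pr+s-t)x^2}{1-rx-(s-2t)x^2},\ \frac{tx^2\bigl(1-(r-p)x-(-q+pr+s-t)x^2\bigr)}{(1-rx-(s-2t)x^2)^2}\right)\cdot c(x),$$ that is, $\frac{1-(r-p)x-(-q+pr+s-t)x^2}{1-rx-(s-2t)x^2}\,c\!\left(\frac{tx^2(1-(r-p)x-(-q+pr+s-t)x^2)}{(1-rx-(s-2t)x^2)^2}\right)$.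
   Context: $c(x)=\frac{1-\sqrt{1-4x}}{2x}$ is the generating function of the Catalan numbers. For power series $g(x)$ with $g(0)\neq0$ and $f(x)$ with $f(0)=0$, the Riordan array $(g,f)$ acts on a power series $h(x)$ by $(g,f)\cdot h(x)=g(x)h(f(x))$. *)

(* Defs.v *)
(* Formal power series over a commutative ring R are
   represented by their coefficient functions nat -> R. *)
From HB Require Import structures.
From mathcomp Require Import all_boot all_order all_algebra.
Set Implicit Arguments. Unset Strict Implicit. Unset Printing Implicit Defensive.
Import Order.TTheory GRing.Theory Num.Theory.
Local Open Scope ring_scope.

Section Series.
Variable R : comUnitRingType.

Definition ps (P : {poly R}) : nat -> R := fun n => P`_n.

Definition sone : nat -> R := fun n => (n == 0%N)%:R.

Definition smul (f g : nat -> R) : nat -> R :=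
  fun n => \sum_(i < n.+1) f i * g (n - i)%N.

Definition spow (f : nat -> R) (k : nat) : nat -> R := iter k (smul f) sone.

(* composition g(f(x)), meaningful when f 0 = 0 *)
Definition scomp (g f : nat -> R) : nat -> R :=
  fun n => \sum_(k < n.+1) g k * spow f k n.

(* multiplicative inverse of a series whose constant term is a unit:
   g_0 = f_0^-1, g_n = - f_0^-1 * sum_{i=1}^n f_i g_{n-i} *)
Fixpoint sinv_aux (f : nat -> R) (n : nat) : nat -> R :=
  match n with
  | 0 => fun m => if m == 0%N then (f 0%N)^-1 else 0
  | n'.+1 =>
      let g := sinv_aux f n' in
      fun m => if (m <= n')%N then g m
               else if m == n'.+1 then
                 - (f 0%N)^-1 * \sum_(i < n'.+1) f i.+1 * g (n' - i)%N
               else 0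
  end.

Definition sinv (f : nat -> R) : nat -> R := fun n => sinv_aux f n n.

(* Riordan array action: (g, f) . h = g(x) h(f(x)) *)
Definition riordan (g f h : nat -> R) : nat -> R := smul g (scomp h f).

End Series.

Definition catalan (n : nat) : nat := 'C(n.*2, n) %/ n.+1.
Definition catalan_gf (R : comUnitRingType) : nat -> R := fun n => (catalan n)%:R.

(* Main.v *)
Require Import Defs.
From HB Require Import structures.
From mathcomp Require Import all_boot all_order all_algebra.
From mathcomp Require Import zify ring.
Import GRing.Theory.

Lemma cat_mul n : catalan n * n.+1 = 'C(n.*2, n).
Proof.
have h := mul_bin_left n.*2 n.
have e : n.*2 - n = n by rewrite -addnn addnK.
rewrite e in h.
have d : 'C(n.*2, n) = n.+1 * ('C(n.*2, n) - 'C(n.*2, n.+1)).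
  by rewrite mulnBr h mulSn addnK.
rewrite /catalan {1}d mulKn // mulnC -d //.
Qed.

Lemma cat_rec n : n.+2 * catalan n.+1 = (4 * n + 2) * catalan n.
Proof.
apply/eqP; rewrite -(eqn_pmul2l (ltn0Sn n)); apply/eqP.
have h1 := cat_mul n.+1. have h0 := cat_mul n.
have e1 : n.+1.*2 = (n.*2).+2 by rewrite doubleS.
rewrite e1 in h1.
have a := mul_bin_diag (n.*2).+2 n.
have b := mul_bin_down (n.*2).+1 n.
simpl in a, b.
have e2 : (n.*2).+1 - n = n.+1 by rewrite -addnn -addnS addKn.
rewrite e2 in b.
have : n.+1 * (n.+1 * (n.+2 * catalan n.+1)) = n.+1 * (n.+1 * ((4 * n + 2) * catalan n)).
  rewrite [n.+2 * _]mulnC h1 -a.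
  idtac.
  rewrite mulnCA -b -h0 -!muln2. ring.
by move/eqP; rewrite eqn_pmul2l // => /eqP.
Qed.

Lemma sym_sum (f : nat -> nat) M :
  \sum_(i < M.+1) f i * (catalan i * catalan (M - i)) =
  \sum_(i < M.+1) f (M - i) * (catalan i * catalan (M - i)).
Proof.
rewrite (reindex_inj rev_ord_inj) /=; apply: eq_bigr => i _.
have hi : (i <= M)%N by rewrite -ltnS ltn_ord.
by rewrite subSS subKn // [catalan (M - i) * _]mulnC.
Qed.

Definition Ssum n := \sum_(i < n.+1) catalan i * catalan (n - i).

Lemma stepA M : 2 * \sum_(i < M.+1) i.+1 * (catalan i * catalan (M - i)) = M.+2 * Ssum M.
Proof.
rewrite mul2n -addnn {2}(sym_sum (fun i => i.+1)) -big_split /= /Ssum big_distrr /=.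
apply: eq_bigr => i _.
have hi : (i <= M)%N by rewrite -ltnS ltn_ord.
rewrite -mulnDl; congr (_ * _); lia.
Qed.

Lemma stepB M : \sum_(i < M.+2) i.+1 * (catalan i * catalan (M.+1 - i)) =
   catalan M.+1 + \sum_(j < M.+1) (4 * j + 2) * (catalan j * catalan (M - j)).
Proof.
rewrite big_ord_recl /= mul1n subn0.
have -> : catalan 0 = 1 by [].
rewrite mul1n; congr (_ + _); apply: eq_bigr => i _.
rewrite /bump /= add1n subSS mulnA cat_rec mulnA; done.
Qed.

Lemma stepC M : \sum_(j < M.+1) (4 * j + 2) * (catalan j * catalan (M - j)) = 2 * M.+1 * Ssum M.
Proof.
have h : \sum_(j < M.+1) (4 * j + 2) * (catalan j * catalan (M - j)) =
   2 * \sum_(j < M.+1) (2 * j + 1) * (catalan j * catalan (M - j)).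
  rewrite big_distrr; apply: eq_bigr => i _ /=; ring.
rewrite h mul2n -addnn {2}(sym_sum (fun j => 2 * j + 1)) -big_split /= /Ssum -mulnA big_distrr /=.
rewrite big_distrr /=; apply: eq_bigr => i _.
have hi : (i <= M)%N by rewrite -ltnS ltn_ord.
rewrite -mulnDl [in RHS]mulnA; congr (_ * _); lia.
Qed.

Lemma segner n : Ssum n = catalan n.+1.
Proof.
elim: n => [|n IH]; first by rewrite /Ssum big_ord1.
have := stepA n.+1; rewrite stepB stepC IH => h.
apply/eqP; rewrite -(eqn_pmul2l (ltn0Sn n.+2)) -h cat_rec; apply/eqP; ring.
Qed.
Local Open Scope ring_scope.
Set Implicit Arguments. Unset Strict Implicit.

Section S.
Variable R : comUnitRingType.
Implicit Types P Q : {poly R}.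
Implicit Types f g h : nat -> R.

Record eqm (m : nat) P Q : Prop := EqM { eqmP : forall i, (i < m)%N -> P`_i = Q`_i }.

Lemma eqm_refl m P : eqm m P P. Proof. by constructor. Qed.
Lemma eqm_sym m P Q : eqm m P Q -> eqm m Q P.
Proof. by move=> [h]; constructor=> i hi; rewrite h. Qed.
Lemma eqm_trans m P Q W : eqm m P Q -> eqm m Q W -> eqm m P W.
Proof. by move=> [h1] [h2]; constructor=> i hi; rewrite h1 ?h2. Qed.
Lemma eqmD m P P' Q Q' : eqm m P P' -> eqm m Q Q' -> eqm m (P + Q) (P' + Q').
Proof. by move=> [h1] [h2]; constructor=> i hi; rewrite !coefD h1 ?h2. Qed.
Lemma eqmN m P P' : eqm m P P' -> eqm m (- P) (- P').
Proof. by move=> [h1]; constructor=> i hi; rewrite !coefN h1. Qed.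
Lemma eqmB m P P' Q Q' : eqm m P P' -> eqm m Q Q' -> eqm m (P - Q) (P' - Q').
Proof. by move=> h1 h2; apply: eqmD => //; apply: eqmN. Qed.
Lemma eqmM m P P' Q Q' : eqm m P P' -> eqm m Q Q' -> eqm m (P * Q) (P' * Q').
Proof.
move=> [h1] [h2]; constructor=> i hi; rewrite !coefM; apply: eq_bigr => j _.
have hj : (j < m)%N by apply: leq_ltn_trans hi; rewrite -ltnS.
have hj' : (i - j < m)%N by apply: leq_ltn_trans hi; exact: leq_subr.
by rewrite h1 // h2.
Qed.
Lemma eqm_eq m P Q : P = Q -> eqm m P Q. Proof. by move->; constructor. Qed.

Definition T m f : {poly R} := \poly_(i < m) f i.
Lemma coefT m f i : (i < m)%N -> (T m f)`_i = f i.
Proof. by move=> hi; rewrite coef_poly hi. Qed.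

Lemma T_smul m f g : eqm m (T m (smul f g)) (T m f * T m g).
Proof.
constructor=> i hi; rewrite coefT // coefM /smul; apply: eq_bigr => j _.
have hj : (j < m)%N by apply: leq_ltn_trans hi; rewrite -ltnS.
have hj' : (i - j < m)%N by apply: leq_ltn_trans hi; exact: leq_subr.
by rewrite !coefT.
Qed.

Lemma T_ps m P : eqm m (T m (ps P)) P.
Proof. by constructor=> i hi; rewrite coefT. Qed.

Lemma T_sone m : eqm m (T m (@sone R)) 1.
Proof. by constructor=> i hi; rewrite coefT // coef1 /sone; case: (i == 0%N). Qed.

Lemma sinv_aux_stable f n k : (k <= n)%N -> sinv_aux f n k = sinv f k.
Proof.
elim: n => [|n IH] hk; first by move: hk; rewrite leqn0 => /eqP ->.
case hkn: (k <= n)%N; first by rewrite /= hkn; exact: IH.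
have -> : k = n.+1 by apply/eqP; rewrite eqn_leq hk ltnNge hkn.
by [].
Qed.

Lemma sinvS f n : sinv f n.+1 =
  - (f 0%N)^-1 * \sum_(i < n.+1) f i.+1 * sinv f (n - i)%N.
Proof.
rewrite /sinv /= ltnn eqxx; congr (_ * _); apply: eq_bigr => i _.
by rewrite sinv_aux_stable // leq_subr.
Qed.

Lemma smul_sinv f : f 0%N = 1 -> forall n, smul f (sinv f) n = sone R n.
Proof.
move=> f0 [|n]; first by rewrite /smul big_ord1 /sinv /= f0 invr1 mulr1.
rewrite /smul big_ord_recl /= f0 mul1r subn0 sinvS f0 invr1 mulN1r.
rewrite [X in _ + X = _](_ : _ = \sum_(i < n.+1) f i.+1 * sinv f (n - i)%N).
  by rewrite addNr.
by apply: eq_bigr => i _; rewrite /bump /= add1n subSS.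
Qed.

Lemma T_sinv m f : f 0%N = 1 -> eqm m (T m f * T m (sinv f)) 1.
Proof.
move=> f0; apply: eqm_trans (eqm_sym (T_smul m f (sinv f))) _.
apply: eqm_trans (@T_sone m); constructor=> i hi; rewrite !coefT //.
exact: smul_sinv.
Qed.

Lemma T_spow m f k : eqm m (T m (spow f k)) (T m f ^+ k).
Proof.
elim: k => [|k IH]; first exact: T_sone.
rewrite exprS /spow iterS -/(spow f k).
apply: eqm_trans (T_smul m f (spow f k)) _; exact: eqmM.
Qed.

Lemma coef_pow0 P k j : P`_0 = 0 -> (j < k)%N -> (P ^+ k)`_j = 0.
Proof.
move=> P0; elim: k j => [|k IH] j //= hj.
rewrite exprS coefM big1 // => i _.
case: i => [[|i] hi] /=; first by rewrite P0 mul0r.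
rewrite IH ?mulr0 //.
have : (i < j)%N by [].
lia.
Qed.

Lemma eqm_comp m P Q (F : {poly R}) : F`_0 = 0 -> eqm m P Q -> eqm m (P \Po F) (Q \Po F).
Proof.
move=> F0 [h].
have tk : take_poly m (P - Q) = 0.
  apply/polyP => i; rewrite coef_take_poly coef0 coefB.
  by case: ifP => // hi; rewrite h // subrr.
have e := poly_take_drop m (P - Q); rewrite tk add0r in e.
constructor=> i hi; apply/eqP; rewrite -subr_eq0 -coefB -comp_polyB -e comp_polyM.
rewrite coefM big1 // => j _.
have : (i - j < m)%N by apply: leq_ltn_trans hi; exact: leq_subr.
move=> hj; rewrite comp_Xn_poly coef_pow0 ?mulr0 //.
Qed.

Lemma comp_sum m h (F : {poly R}) : \poly_(k < m) h k \Po F = \sum_(k < m) h k *: F ^+ k.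
Proof.
rewrite poly_def raddf_sum /=; apply: eq_bigr => k _.
by rewrite comp_polyZ comp_Xn_poly.
Qed.

Lemma T_scomp m h f : f 0%N = 0 ->
  eqm m (T m (scomp h f)) (\poly_(k < m) h k \Po T m f).
Proof.
move=> f0; constructor=> j hj; rewrite coefT // comp_sum coef_sum /scomp.
have Tf0 : (T m f)`_0 = 0 by rewrite coefT ?f0 //; lia.
rewrite -(big_mkord xpredT (fun k => (h k *: T m f ^+ k)`_j)).
rewrite (big_cat_nat _ (n := j.+1)) //= [X in _ + X]big_nat_cond [X in _ + X]big1 ?addr0.
  rewrite big_mkord; apply: eq_bigr => k _; rewrite coefZ -(eqmP (T_spow m f k)) // coefT //.
move=> k /andP [/andP [hk _] _]; rewrite coefZ coef_pow0 ?mulr0 //.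
Qed.

End S.

Section M.
Variable R : comUnitRingType.

Lemma eqm0D m (A B : {poly R}) : eqm m A 0 -> eqm m B 0 -> eqm m (A + B) 0.
Proof. move=> h1 h2; rewrite -[0](addr0 0); exact: eqmD. Qed.

Lemma eqm0M m (A B C : {poly R}) : eqm m A B -> eqm m ((A - B) * C) 0.
Proof.
move=> h; rewrite -(mul0r C); apply: eqmM => //.
rewrite -(subrr B); apply: eqmB => //.
Qed.

Lemma cat_eq m : eqm m (\poly_(k < m) catalan_gf R k)
                      (1 + 'X * (\poly_(k < m) catalan_gf R k) ^+ 2).
Proof.
constructor=> i hi; rewrite coefD coef1 coefXM coef_poly hi.
case: i hi => [|i] hi /=; first by rewrite addr0.
rewrite add0r expr2 coefM /catalan_gf -segner /Ssum natr_sum; apply: eq_bigr => j _.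
have hj : (j < m)%N by apply: leq_ltn_trans hi; rewrite ltnW // ltnS -ltnS.
have hj' : (i - j < m)%N by apply: leq_ltn_trans hi; rewrite ltnW // ltnS leq_subr.
by rewrite !coef_poly hj hj' natrM.
Qed.

Lemma catK_eq m (F : {poly R}) : F`_0 = 0 ->
  let K := \poly_(k < m) catalan_gf R k \Po F in eqm m K (1 + F * K ^+ 2).
Proof.
move=> F0 K; apply: eqm_trans (eqm_comp F0 (cat_eq m)) _; apply: eqm_eq.
by rewrite comp_polyD comp_polyM comp_polyX !expr2 comp_polyM (comp_poly_multiplicative F).2.
Qed.

Lemma uniq0 m (U E : {poly R}) : eqm m (U * E) 0 -> E`_0 = -1 -> eqm m U 0.
Proof.
move=> [h] E0.
suff H : forall i, (i < m)%N -> forall j, (j <= i)%N -> U`_j = 0.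
  by constructor=> i hi; rewrite coef0 (H i hi i).
elim=> [|i IH] hi j hj.
  move: hj; rewrite leqn0 => /eqP ->.
  have := h 0%N hi; rewrite coefM big_ord1 E0 coef0 mulrN1 => /eqP.
  by rewrite oppr_eq0 => /eqP.
rewrite leq_eqVlt in hj; case/orP: hj => [/eqP ->|hj]; last first.
  by apply: (IH (ltnW hi)).
have := h i.+1 hi; rewrite coefM big_ord_recr /= subnn E0 coef0 big1.
  by rewrite add0r mulrN1 => /eqP; rewrite oppr_eq0 => /eqP.
move=> k _; rewrite (IH (ltnW hi)) ?mul0r //; rewrite -ltnS; exact: ltn_ord.
Qed.

End M.

Lemma sq_coef (R : comUnitRingType) m (a : nat -> R) k : (k.+3 < m)%N ->
  ((T m a) ^+ 2)`_k.+1 = a 0%N * a k.+1 +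
     \sum_(1 <= j < k.+3 - 2) a j * a (k.+3 - j - 2)%N + a k.+1 * a 0%N.
Proof.
move=> hk; rewrite expr2 coefM big_ord_recr big_ord_recl /= subnn subn0.
rewrite !coefT; try lia.
congr (_ + _ + _).
rewrite -[(k.+3 - 2)%N]/(k.+1) big_add1 /= big_mkord.
apply: eq_bigr => j _; have hj := ltn_ord j; rewrite /bump /= !coefT; try lia.
congr (_ * _); congr (a _); lia.
Qed.

Lemma a_eq (R : comUnitRingType) (p q r s t : R) (a : nat -> R)
  (h0 : a 0%N = 1) (h1 : a 1%N = p) (h2 : a 2%N = q)
  (hrec : forall n : nat, (3 <= n)%N ->
     a n = r * a (n - 1)%N + s * a (n - 2)%N
           + t * \sum_(1 <= k < n - 2) a k * a (n - k - 2)%N) m :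
  let Np : {poly R} := 1 - (r - p)%:P * 'X - (- q + p * r + s - t)%:P * 'X^2 in
  let Dp : {poly R} := 1 - r%:P * 'X - (s - 2%:R * t)%:P * 'X^2 in
  eqm m (t%:P * 'X^2 * (T m a) ^+ 2 - Dp * T m a + Np) 0.
Proof.
move=> Np Dp; constructor=> i hi.
rewrite /Np /Dp !mulrBl mul1r -!mulrA !(coefD, coefN, coefCM, coefXM, coef1, coefX, coefXn, coef0).
case: i hi => [|[|[|k]]] hi /=.
- rewrite coefT // h0; ring.
- rewrite !coefT; try lia. rewrite h0 h1; ring.
- rewrite expr2 coefM big_ord1 /= !coefT; try lia. rewrite h0 h1 h2; ring.
rewrite !coefT; try lia. rewrite (hrec k.+3) // sq_coef // h0.
have -> : (k.+3 - 1 = k.+2)%N by [].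
have -> : (k.+3 - 2 = k.+1)%N by [].
ring.
Qed.
Unset Implicit Arguments. Set Strict Implicit.

Theorem mainTheorem6 (R : comUnitRingType) (p q r s t : R) (a : nat -> R)
  (h0 : a 0%N = 1) (h1 : a 1%N = p) (h2 : a 2%N = q)
  (hrec : forall n : nat, (3 <= n)%N ->
     a n = r * a (n - 1)%N + s * a (n - 2)%N
           + t * \sum_(1 <= k < n - 2) a k * a (n - k - 2)%N) :
  let Np : {poly R} := 1 - (r - p)%:P * 'X - (- q + p * r + s - t)%:P * 'X^2 in
  let Dp : {poly R} := 1 - r%:P * 'X - (s - 2%:R * t)%:P * 'X^2 in
  forall n : nat,
    a n = riordan (smul (ps Np) (sinv (ps Dp)))
                  (smul (ps (t%:P * 'X^2 * Np)) (sinv (ps (Dp * Dp))))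
                  (@catalan_gf R) n.
Proof.
move=> Np Dp n.
pose m := n.+1.
have hA := a_eq h0 h1 h2 hrec m.
set G := smul (ps Np) (sinv (ps Dp)).
set Fs := smul (ps (t%:P * 'X^2 * Np)) (sinv (ps (Dp * Dp))).
rewrite /riordan.
set RHS := smul G (scomp (catalan_gf R) Fs).
have hD0 : Dp`_0 = 1.
  by rewrite /Dp !(coefD, coefN, coefCM, coefXM, coef1, coefX, coefXn) /= !mulr0 !subr0.
have hDD0 : ps (Dp * Dp) 0 = 1 by rewrite /ps coefM big_ord1 /= hD0 mulr1.
have hF0 : Fs 0%N = 0.
  by rewrite /Fs /smul big_ord1 /ps -!mulrA coefCM !coefXM /= mulr0 mul0r.
set I1 := T m (sinv (ps Dp)).
set I2 := T m (sinv (ps (Dp * Dp))).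
have z1 : eqm m (Dp * I1) 1.
  apply: eqm_trans (eqmM (eqm_sym (T_ps m Dp)) (eqm_refl m I1)) _.
  exact: T_sinv.
have z2 : eqm m (Dp * Dp * I2) 1.
  apply: eqm_trans (eqmM (eqm_sym (T_ps m (Dp * Dp))) (eqm_refl m I2)) _.
  exact: T_sinv.
have z3 : eqm m (T m Fs) (t%:P * 'X^2 * Np * I2).
  exact: eqm_trans (T_smul _ _ _) (eqmM (T_ps _ _) (eqm_refl _ _)).
have TG : eqm m (T m G) (Np * I1).
  exact: eqm_trans (T_smul _ _ _) (eqmM (T_ps _ _) (eqm_refl _ _)).
have TF0 : (T m Fs)`_0 = 0 by rewrite coefT.
set K := \poly_(k < m) catalan_gf R k \Po T m Fs.
have z4 : eqm m K (1 + T m Fs * K ^+ 2) := catK_eq m TF0.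
have TC : eqm m (T m (scomp (catalan_gf R) Fs)) K := T_scomp m (catalan_gf R) hF0.
have z5 : eqm m (T m RHS) (Np * I1 * K) := eqm_trans (T_smul _ _ _) (eqmM TG TC).
set V := T m RHS.
set TF := T m Fs.
set tX2 := t%:P * 'X^2.
have hV : eqm m (tX2 * V ^+ 2 - Dp * V + Np) 0.
  have -> : tX2 * V ^+ 2 - Dp * V + Np =
    (K - (1 + TF * K ^+ 2)) * (- Np)
    + (TF - tX2 * Np * I2) * (- (Np * K ^+ 2))
    + (Dp * I1 - 1) * (tX2 * Np ^+ 2 * K ^+ 2 * I2 * (2%:R + (Dp * I1 - 1)))
    + (Dp * Dp * I2 - 1) * (- (tX2 * Np ^+ 2 * K ^+ 2 * I1 ^+ 2))
    + (Dp * I1 - 1) * (- (Np * K))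
    + (V - Np * I1 * K) * (tX2 * (2%:R * Np * I1 * K + (V - Np * I1 * K)) - Dp).
    ring.
  repeat apply: eqm0D; exact: eqm0M.
have hU : eqm m ((T m a - V) * (tX2 * (T m a + V) - Dp)) 0.
  have -> : (T m a - V) * (tX2 * (T m a + V) - Dp) =
     (tX2 * T m a ^+ 2 - Dp * T m a + Np) - (tX2 * V ^+ 2 - Dp * V + Np) by ring.
  by have := eqmB hA hV; rewrite subr0.
have E0 : (tX2 * (T m a + V) - Dp)`_0 = -1.
  by rewrite coefB hD0 /tX2 -mulrA coefCM -mulrA !coefXM /= mulr0 sub0r.
have := eqmP (uniq0 hU E0) (ltnSn n).
rewrite coefB coef0 !coefT // => /eqP; by rewrite subr_eq0 => /eqP.
Qed.
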